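(* In the setting below, the kernel of $\Phi$ contains the ideal $J_K$ of $\mathbb{Q}[X_{F,e},Y_k:F\in\mathcal{F}_K,k\in K]$ generated by the linear forms $\sum_{F\in\mathcal{F}_K}\langle u,\ell_F\rangle X_{F,e}+\sum_{k\in K}\langle u,\ell_{H_k}\rangle Y_k$ for all $u\in M$.
   Context: Setting: $R$ is a reduced crystallographic root system spanning an $n$-dimensional Euclidean space $V$, with simple system $S=\{\alpha_1,\dots,\alpha_n\}$ identified with $\{1,\dots,n\}$ and Weyl group $W$; $M$ is a lattice with $\mathbb{Z}R\subseteq M\subseteq\{x:2\langle x,\alpha\rangle/\langle\alpha,\alpha\rangle\in\mathbb{Z}\ \forall\alpha\in R\}$; $\Lambda\subset C_S\cap\mathbb{Q}M$ finite with $P=\operatorname{conv}(W(\Lambda))$ full-dimensional, simple (each vertex in exactly $n$ facets) and non-degenerate (no vertex on the boundary of $C_S$); $K\subseteq S$, $W_K$ generated by the reflections $r_k$ in $\alpha_k$, $k\in K$, $H_k$ the fixed hyperplane of $r_k$, $C_K=\{x:\langle x,\alpha_k\rangle\ge0\ \forall k\in K\}$. $\mathcal{F}_K$ is the set of facets of $P$ with barycenter in $C_K$, $W_F$ the stabilizer of $F$ in $W_K$, $\mathcal{F}=\{(F,s):F\in\mathcal{F}_K,s\in W_K/W_F\}$. For a facet $G$ of $P$, $\ell_G$ is its outward normal primitive in $M^\vee=\{y:\langle y,u\rangle\in\mathbb{Z}\ \forall u\in M\}$, and $\ell_{H_k}$ is the primitive outward normal of the facet $H_k\cap P$ of $P\cap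 C_K$. $H^*(X_P;\mathbb{Q})=\mathbb{Q}[X_{F,s}:(F,s)\in\mathcal{F}]/(I_P+J_P)$ for the toric variety $X_P$ of $P$ with respect to $M$, $I_P$ generated by $X_{F_1,s_1}\cdots X_{F_p,s_p}$ with $s_1(F_1)\cap\cdots\cap s_p(F_p)=\emptyset$, $J_P$ generated by $\sum_{(F,s)\in\mathcal{F}}\langle u,\ell_{s(F)}\rangle X_{F,s}$, $u\in M$. For $F\in\mathcal{F}_K$, $s\in W_K$ write $s(\ell_F)-\ell_F=\sum_{k\in K}C_{F,s,k}\ell_{H_k}$ with $C_{F,s,k}\in\mathbb{Q}$ (uniquely determined, depending only on $sW_F$). $\Phi:\mathbb{Q}[X_{F,e},Y_k]\to H^*(X_P;\mathbb{Q})$ is the ring homomorphism with $\Phi(X_{F,e})=\sum_{s\in W_K/W_F}X_{F,s}$, $\Phi(Y_k)=\sum_{(F,s)\in\mathcal{F}}C_{F,s,k}X_{F,s}$. *)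

(* Defs.v *)
From HB Require Import structures.
From mathcomp Require Import all_boot all_order all_algebra.
From mathcomp Require Import reals.
From mathcomp Require Import mpoly.

Set Implicit Arguments.
Unset Strict Implicit.
Unset Printing Implicit Defensive.

Import Order.TTheory GRing.Theory Num.Theory.
Local Open Scope ring_scope.

Definition dot {R : realType} {n : nat} (x y : 'rV[R]_n) : R :=
  \sum_(i < n) x 0 i * y 0 i.

Definition cartan {R : realType} {n : nat} (x a : 'rV[R]_n) : R :=
  2 * dot x a / dot a a.

Definition refl {R : realType} {n : nat} (a x : 'rV[R]_n) : 'rV[R]_n :=
  x - cartan x a *: a.

Definition is_root_system {R : realType} {n : nat} (rs : seq 'rV[R]_n) : Prop :=
  [/\ (0 : 'rV[R]_n) \notin rs,
      (<<rs>> = fullv)%VS,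
      {in rs &, forall a b, refl a b \in rs},
      {in rs &, forall a b, cartan b a \is a Num.int} &
      {in rs, forall a (c : R), c *: a \in rs -> c = 1 \/ c = -1}].

Definition is_simple_system {R : realType} {n : nat} (rs : seq 'rV[R]_n)
    (alpha : 'I_n -> 'rV[R]_n) : Prop :=
  [/\ forall i, alpha i \in rs,
      free [seq alpha i | i <- enum 'I_n] &
      forall b, b \in rs -> exists c : 'I_n -> int,
        b = \sum_(i < n) (c i)%:~R *: alpha i /\
        ((forall i, 0 <= c i) \/ (forall i, c i <= 0))].

(* Elements of the Weyl group W as words of reflections in roots *)
Definition wact {R : realType} {n : nat} (w : seq 'rV[R]_n) (x : 'rV[R]_n) :=
  foldr refl x w.

(* Elements of W_K as words in the simple reflections r_k, k in K *)
Definition wactK {R : realType} {n : nat} (alpha : 'I_n -> 'rV[R]_n)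
    (s : seq 'I_n) (x : 'rV[R]_n) :=
  foldr (fun k y => refl (alpha k) y) x s.

Definition is_lattice_M {R : realType} {n : nat} (rs : seq 'rV[R]_n)
    (M : 'rV[R]_n -> Prop) : Prop :=
  [/\ M 0,
      forall x y, M x -> M y -> M (x - y),
      forall a, a \in rs -> M a &
      forall x, M x -> forall a, a \in rs -> cartan x a \is a Num.int].

Definition Mdual {R : realType} {n : nat} (M : 'rV[R]_n -> Prop) (y : 'rV[R]_n) :=
  forall u, M u -> dot y u \is a Num.int.

Definition primitive {R : realType} {n : nat} (M : 'rV[R]_n -> Prop) (l : 'rV[R]_n) :=
  [/\ l != 0, Mdual M l &
      forall y (k : nat), Mdual M y -> l = k%:R *: y -> k = 1%N].

Definition QM {R : realType} {n : nat} (M : 'rV[R]_n -> Prop) (x : 'rV[R]_n) :=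
  exists m (N : nat), [/\ M m, (0 < N)%N & x = N%:R^-1 *: m].

Definition in_CS {R : realType} {n : nat} (alpha : 'I_n -> 'rV[R]_n) x :=
  forall i, 0 <= dot x (alpha i).

Definition in_CK {R : realType} {n : nat} (alpha : 'I_n -> 'rV[R]_n)
    (K : {set 'I_n}) x :=
  forall k, k \in K -> 0 <= dot x (alpha k).

Definition Worbit {R : realType} {n : nat} (rs : seq 'rV[R]_n)
    (Lam : seq 'rV[R]_n) (x : 'rV[R]_n) :=
  exists w, all (mem rs) w /\ exists2 l, l \in Lam & x = wact w l.

Definition conv {R : realType} {n : nat} (S : 'rV[R]_n -> Prop) (x : 'rV[R]_n) :=
  exists (m : nat) (p : 'I_m -> 'rV[R]_n) (t : 'I_m -> R),
    [/\ forall i, S (p i), forall i, 0 <= t i, \sum_i t i = 1 &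
        x = \sum_i t i *: p i].

Definition polytope {R : realType} {n : nat} (rs Lam : seq 'rV[R]_n) :=
  conv (Worbit rs Lam).

Definition face {R : realType} {n : nat} (P : 'rV[R]_n -> Prop) (l x : 'rV[R]_n) :=
  P x /\ forall y, P y -> dot l y <= dot l x.

Definition affine_dim {R : realType} {n : nat} (S : 'rV[R]_n -> Prop) (d : nat) :=
  (exists x0 (pts : seq 'rV[R]_n), [/\ S x0, forall p, p \in pts -> S p &
       \dim <<[seq (p - x0)%R | p : 'rV[R]_n <- pts]>>%VS = d]) /\
  (forall x0 (pts : seq 'rV[R]_n), S x0 -> (forall p, p \in pts -> S p) ->
       (\dim <<[seq (p - x0)%R | p : 'rV[R]_n <- pts]>>%VS <= d)%N).

(* Facets of P are encoded by their primitive outward normals l_G in M^vee: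
   facet_normal M P l  <->  l = l_G for the facet G = face P l. *)
Definition facet_normal {R : realType} {n : nat} (M : 'rV[R]_n -> Prop)
    (P : 'rV[R]_n -> Prop) (l : 'rV[R]_n) :=
  primitive M l /\ affine_dim (face P l) n.-1.

Definition vertex {R : realType} {n : nat} (P : 'rV[R]_n -> Prop) (v : 'rV[R]_n) :=
  exists l, forall x, face P l x <-> x = v.

Definition barycenter {R : realType} {n : nat} (P S : 'rV[R]_n -> Prop)
    (b : 'rV[R]_n) :=
  exists vs : seq 'rV[R]_n,
    [/\ uniq vs, forall v, v \in vs <-> (vertex P v /\ S v) &
        b = (size vs)%:R^-1 *: \sum_(v <- vs) v].

Definition simple_polytope {R : realType} {n : nat} (M : 'rV[R]_n -> Prop)
    (P : 'rV[R]_n -> Prop) :=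
  forall v, vertex P v -> exists ls : seq 'rV[R]_n,
    [/\ uniq ls, size ls = n &
        forall l, l \in ls <-> (facet_normal M P l /\ face P l v)].

Definition non_degenerate {R : realType} {n : nat} (alpha : 'I_n -> 'rV[R]_n)
    (P : 'rV[R]_n -> Prop) :=
  forall v, vertex P v -> in_CS alpha v -> forall i, 0 < dot v (alpha i).

Definition in_FK {R : realType} {n : nat} (alpha : 'I_n -> 'rV[R]_n)
    (K : {set 'I_n}) (M P : 'rV[R]_n -> Prop) (l : 'rV[R]_n) :=
  facet_normal M P l /\ exists2 b, barycenter P (face P l) b & in_CK alpha K b.

Definition facet_image {R : realType} {n : nat} (alpha : 'I_n -> 'rV[R]_n)
    (P : 'rV[R]_n -> Prop) (s : seq 'I_n) (F G : 'rV[R]_n) :=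
  forall x, face P G x <-> exists2 y, face P F y & x = wactK alpha s y.

(* G is (the normal of) a facet in the W_K-orbit of the facet F; the coset
   s W_F in W_K / W_F is identified with the facet s(F). *)
Definition in_WK_orbit {R : realType} {n : nat} (alpha : 'I_n -> 'rV[R]_n)
    (K : {set 'I_n}) (M P : 'rV[R]_n -> Prop) (F G : 'rV[R]_n) :=
  facet_normal M P G /\
  exists s : seq 'I_n, all (mem K) s /\ facet_image alpha P s F G.

Definition is_lH {R : realType} {n : nat} (alpha : 'I_n -> 'rV[R]_n)
    (K : {set 'I_n}) (M P : 'rV[R]_n -> Prop) (k : 'I_n) (l : 'rV[R]_n) :=
  primitive M l /\
  forall x, face (fun y => P y /\ in_CK alpha K y) l x <->
            [/\ P x, in_CK alpha K x & dot x (alpha k) = 0].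

(* a real number which is an integer, viewed as a rational *)
Definition toQ {R : realType} (x : R) : rat := (Num.floor x)%:~R.

Definition ideal_gen {N : nat} (S : {mpoly rat[N]} -> Prop) (p : {mpoly rat[N]}) :=
  exists (gs cs : seq {mpoly rat[N]}),
    [/\ size gs = size cs, forall i : 'I_(size gs), S gs`_i &
        p = \sum_(i < size gs) cs`_i * gs`_i].

Definition setU_pred {T : Type} (A B : T -> Prop) : T -> Prop :=
  fun x => A x \/ B x.

(* Polynomial ring Q[X_{F,s} : (F,s) in \mathcal F]: the variables are
   indexed by 'I_(size Fam), where Fam enumerates \mathcal F as pairs
   (l_F, l_{s(F)}). *)
Definition famF {R : realType} {n : nat} (Fam : seq ('rV[R]_n * 'rV[R]_n))
    (j : nat) := (nth (0, 0) Fam j).1.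
Definition famG {R : realType} {n : nat} (Fam : seq ('rV[R]_n * 'rV[R]_n))
    (j : nat) := (nth (0, 0) Fam j).2.

Definition IP_gen {R : realType} {n : nat} (P : 'rV[R]_n -> Prop)
    (Fam : seq ('rV[R]_n * 'rV[R]_n)) (g : {mpoly rat[size Fam]}) :=
  exists js : seq 'I_(size Fam),
    ~ (exists x, forall j, j \in js -> face P (famG Fam j) x) /\
    g = \prod_(j <- js) 'X_j.

Definition JP_gen {R : realType} {n : nat} (M : 'rV[R]_n -> Prop)
    (Fam : seq ('rV[R]_n * 'rV[R]_n)) (g : {mpoly rat[size Fam]}) :=
  exists u, M u /\
    g = \sum_(j < size Fam) toQ (dot u (famG Fam j)) *: 'X_j.

(* Source ring Q[X_{F,e}, Y_k : F in F_K, k in K]: variables indexed by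
   'I_(size FK + #|K|); X_{F,e} is 'X_(lshift _ a) for F = FK`_a and Y_k is
   'X_(rshift _ i) for k = enum_val i. *)
Definition JK_gen {R : realType} {n : nat} (K : {set 'I_n})
    (M : 'rV[R]_n -> Prop) (lH : 'I_n -> 'rV[R]_n) (FK : seq 'rV[R]_n)
    (g : {mpoly rat[size FK + #|K|]}) :=
  exists u, M u /\
    g = \sum_(a < size FK) toQ (dot u FK`_a) *: 'X_(lshift #|K| a)
      + \sum_(i < #|K|) toQ (dot u (lH (enum_val i))) *: 'X_(rshift (size FK) i).

Definition Phi_var {R : realType} {n : nat} (K : {set 'I_n})
    (FK : seq 'rV[R]_n) (Fam : seq ('rV[R]_n * 'rV[R]_n))
    (C : 'rV[R]_n -> 'rV[R]_n -> 'I_n -> rat)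
    (i : 'I_(size FK + #|K|)) : {mpoly rat[size Fam]} :=
  match split i with
  | inl a => \sum_(j < size Fam | famF Fam j == FK`_a) 'X_j
  | inr k => \sum_(j < size Fam) C (famF Fam j) (famG Fam j) (enum_val k) *: 'X_j
  end.

Definition Phi {R : realType} {n : nat} (K : {set 'I_n})
    (FK : seq 'rV[R]_n) (Fam : seq ('rV[R]_n * 'rV[R]_n))
    (C : 'rV[R]_n -> 'rV[R]_n -> 'I_n -> rat)
    (p : {mpoly rat[size FK + #|K|]}) : {mpoly rat[size Fam]} :=
  p \mPo [tuple @Phi_var R n K FK Fam C i | i < size FK + #|K|].

(* Main.v *)
Require Import Defs.
From HB Require Import structures.
From mathcomp Require Import all_boot all_order all_algebra.
From mathcomp Require Import reals.
From mathcomp Require Import mpoly.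
From mathcomp Require Import ring.
Import Order.TTheory GRing.Theory Num.Theory.
Local Open Scope ring_scope.
Set Implicit Arguments.
Unset Strict Implicit.

Section Dot.
Variables (R : realType) (n : nat).
Implicit Types (x y z a : 'rV[R]_n).

Lemma dotC x y : dot x y = dot y x.
Proof. by rewrite /dot; apply: eq_bigr => i _; rewrite mulrC. Qed.
Lemma dotDl x y z : dot (x + y) z = dot x z + dot y z.
Proof. by rewrite /dot -big_split; apply: eq_bigr => i _; rewrite mxE mulrDl. Qed.
Lemma dotZl t x z : dot (t *: x) z = t * dot x z.
Proof. by rewrite /dot mulr_sumr; apply: eq_bigr => i _; rewrite mxE mulrA. Qed.
Lemma dotNl x z : dot (- x) z = - dot x z.
Proof. by rewrite -scaleN1r dotZl mulN1r. Qed.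
Lemma dotBl x y z : dot (x - y) z = dot x z - dot y z.
Proof. by rewrite dotDl dotNl. Qed.
Lemma dotDr x y z : dot z (x + y) = dot z x + dot z y.
Proof. by rewrite dotC dotDl !(dotC z). Qed.
Lemma dotZr t x z : dot z (t *: x) = t * dot z x.
Proof. by rewrite dotC dotZl dotC. Qed.
Lemma dotBr x y z : dot z (x - y) = dot z x - dot z y.
Proof. by rewrite !(dotC z) dotBl. Qed.
Lemma dot0l z : dot 0 z = 0.
Proof. by rewrite -(scale0r 0) dotZl mul0r. Qed.
Lemma dot0r z : dot z 0 = 0.
Proof. by rewrite dotC dot0l. Qed.
Lemma dot_suml m (t : 'I_m -> R) (p : 'I_m -> 'rV[R]_n) z :
  dot (\sum_i t i *: p i) z = \sum_i t i * dot (p i) z.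
Proof.
apply: (big_rec2 (fun a b => dot a z = b)) => [|i a b _ <-].
  by rewrite dot0l.
by rewrite dotDl dotZl.
Qed.
Lemma dot_ge0 x : 0 <= dot x x.
Proof. by apply: sumr_ge0 => i _; rewrite -expr2 sqr_ge0. Qed.
Lemma dot_eq0 x : (dot x x == 0) = (x == 0).
Proof.
apply/idP/eqP => [/eqP|->]; last by rewrite dot0l.
rewrite /dot => /eqP; rewrite psumr_eq0 => [/allP H|i _]; last by rewrite -expr2 sqr_ge0.
apply/rowP => i; rewrite mxE; have := H i (mem_index_enum i).
by rewrite /= mulf_eq0 orbb => /eqP.
Qed.
End Dot.
Section Refl.
Variables (R : realType) (n : nat).
Implicit Types (x y z a : 'rV[R]_n).

Lemma reflE a x : refl a x = x - (2 * dot x a / dot a a) *: a.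
Proof. by []. Qed.

Lemma reflD a x y : refl a (x + y) = refl a x + refl a y.
Proof.
rewrite !reflE dotDl !mulrDr !mulrDl scalerDl; set u := _ *: a; set v := _ *: a.
by rewrite opprD addrACA.
Qed.
Lemma reflZ a t x : refl a (t *: x) = t *: refl a x.
Proof. rewrite !reflE dotZl; apply/rowP => i; rewrite !mxE; ring. Qed.
Lemma refl0 a : refl a 0 = 0.
Proof. by rewrite reflE dot0l mulr0 mul0r scale0r subr0. Qed.

Lemma refl_dot a x y : dot a a != 0 -> dot (refl a x) (refl a y) = dot x y.
Proof.
move=> Ha; rewrite !reflE !dotBl !dotBr !dotZl !dotZr (dotC y a).
by field.
Qed.
Lemma reflK a x : dot a a != 0 -> refl a (refl a x) = x.
Proof.
move=> Ha; have Hy : dot (refl a x) a = - dot x a.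
  by rewrite reflE dotBl dotZl; field.
rewrite [refl a (refl a x)]reflE Hy reflE; apply/rowP => i; rewrite !mxE; field=> //.
Qed.
End Refl.
Section WK.
Variables (R : realType) (n : nat) (alpha : 'I_n -> 'rV[R]_n).
Hypothesis Ha : forall k, dot (alpha k) (alpha k) != 0.
Implicit Types (x y z : 'rV[R]_n) (s : seq 'I_n).

Lemma wactK_cons k s x : wactK alpha (k :: s) x = refl (alpha k) (wactK alpha s x).
Proof. by []. Qed.
Lemma wactKD s x y : wactK alpha s (x + y) = wactK alpha s x + wactK alpha s y.
Proof. by elim: s => //= k s IH; rewrite IH reflD. Qed.
Lemma wactKZ s t x : wactK alpha s (t *: x) = t *: wactK alpha s x.
Proof. by elim: s => //= k s IH; rewrite IH reflZ. Qed.
Lemma wactK0 s : wactK alpha s 0 = 0.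
Proof. by elim: s => //= k s ->; rewrite refl0. Qed.
Lemma wactK_sum s m (t : 'I_m -> R) (p : 'I_m -> 'rV[R]_n) :
  wactK alpha s (\sum_i t i *: p i) = \sum_i t i *: wactK alpha s (p i).
Proof.
rewrite (big_morph _ (wactKD s) (wactK0 s)); apply: eq_bigr => i _.
by rewrite wactKZ.
Qed.
Lemma wactK_dot s x y : dot (wactK alpha s x) (wactK alpha s y) = dot x y.
Proof. by elim: s => //= k s IH; rewrite refl_dot. Qed.
Lemma wactK_revK s x : wactK alpha (rev s) (wactK alpha s x) = x.
Proof.
elim: s x => //= k s IH x.
rewrite rev_cons -cats1 /wactK foldr_cat /= reflK //; exact: IH.
Qed.
Lemma wactKK_rev s x : wactK alpha s (wactK alpha (rev s) x) = x.
Proof. by have := wactK_revK (rev s) x; rewrite revK. Qed.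
Lemma wactK_dotV s x y : dot (wactK alpha s x) y = dot x (wactK alpha (rev s) y).
Proof. by rewrite -{1}(wactKK_rev s y) wactK_dot. Qed.
End WK.
Section Inv.
Variables (R : realType) (n : nat) (rs : seq 'rV[R]_n) (alpha : 'I_n -> 'rV[R]_n).
Variables (M : 'rV[R]_n -> Prop) (Lam : seq 'rV[R]_n).
Hypothesis alpha_rs : forall i, alpha i \in rs.
Hypothesis Ha : forall k, dot (alpha k) (alpha k) != 0.
Hypothesis HM : is_lattice_M rs M.
Implicit Types (x y z : 'rV[R]_n) (s : seq 'I_n).

Lemma Worbit_wactK s x : Worbit rs Lam x -> Worbit rs Lam (wactK alpha s x).
Proof.
case=> w [Hw [l Hl ->]]; exists (map alpha s ++ w); split.
  by rewrite all_cat Hw andbT; apply/allP => y /mapP [i _ ->]; exact: alpha_rs.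
by exists l => //; rewrite /wact foldr_cat foldr_map.
Qed.

Lemma P_wactK s x : polytope rs Lam x -> polytope rs Lam (wactK alpha s x).
Proof.
case=> m [p [t [H1 H2 H3 ->]]]; exists m, (fun i => wactK alpha s (p i)), t.
split => //; last exact: wactK_sum.
by move=> i; apply: Worbit_wactK.
Qed.

Lemma M_add x y : M x -> M y -> M (x + y).
Proof.
case: HM => M0 MB _ _ Mx My.
have := MB _ _ Mx (MB _ _ M0 My); by rewrite sub0r opprK.
Qed.
Lemma M_opp x : M x -> M (- x).
Proof. by case: HM => M0 MB _ _ Mx; rewrite -sub0r; apply: MB. Qed.
Lemma M_natmul x k : M x -> M (x *+ k).
Proof.
case: HM => M0 _ _ _ Mx; elim: k => [|k IH]; first by rewrite mulr0n.
by rewrite mulrS; apply: M_add.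
Qed.
Lemma M_intmul x (z : int) : M x -> M (x *~ z).
Proof.
move=> Mx; case: z => k; first by apply: M_natmul.
by rewrite NegzE mulrNz; apply/M_opp/M_natmul.
Qed.
Lemma M_wactK s x : M x -> M (wactK alpha s x).
Proof.
elim: s => //= k s IH Mx; have {IH}My := IH Mx.
set y := wactK alpha s x.
case: HM => M0 MB Mrs Mint.
rewrite /refl; apply: MB => //.
rewrite -(floorK (Mint _ My _ (alpha_rs k))).
by rewrite scaler_int; apply: M_intmul; apply: Mrs.
Qed.
Lemma Mdual_wactK s y : Mdual M y -> Mdual M (wactK alpha s y).
Proof.
move=> Hy u Mu; rewrite wactK_dotV //; apply: Hy.
exact: M_wactK.
Qed.

Lemma primitive_wactK s l : primitive M l -> primitive M (wactK alpha s l).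
Proof.
case=> l0 Ml Hl; split.
- apply: contra l0 => /eqP H; apply/eqP.
  by rewrite -(wactK_revK Ha s l) H wactK0.
- exact: Mdual_wactK.
- move=> y k My Hk; apply: (Hl (wactK alpha (rev s) y)); first exact: Mdual_wactK.
  by rewrite -wactKZ -Hk wactK_revK.
Qed.

Lemma face_wactK s l x :
  face (polytope rs Lam) (wactK alpha s l) x <->
  exists2 y, face (polytope rs Lam) l y & x = wactK alpha s y.
Proof.
split.
- case=> Px Hx; exists (wactK alpha (rev s) x); last by rewrite wactKK_rev.
  split; first exact: P_wactK.
  move=> z Pz; rewrite -(wactK_dot Ha s l z) -(wactK_dot Ha s l (wactK alpha (rev s) x)) wactKK_rev //.
  by apply: Hx; apply: P_wactK.
- case=> y [Py Hy] ->; split; first exact: P_wactK.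
  move=> z Pz; rewrite wactK_dot // wactK_dotV //.
  by apply: Hy; apply: P_wactK.
Qed.
End Inv.
Section Span.
Variables (R : realType) (n : nat).
Implicit Types (x y z l v : 'rV[R]_n) (X : seq 'rV[R]_n).

Lemma orth_span l X v : (forall w, w \in X -> dot l w = 0) ->
  v \in <<X>>%VS -> dot l v = 0.
Proof.
move=> H /(coord_span (X := in_tuple X)) ->.
rewrite dotC dot_suml big1 // => i _; rewrite dotC H ?mulr0 //.
by apply: mem_nth.
Qed.

Lemma notin_span l X : l != 0 -> (forall w, w \in X -> dot l w = 0) ->
  l \notin <<X>>%VS.
Proof.
move=> l0 H; apply/negP => /(orth_span H) /eqP.
by rewrite dot_eq0 (negbTE l0).
Qed.

Lemma dim_rV : \dim (fullv : {vspace 'rV[R]_n}) = n.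
Proof. by rewrite dimvf /dim /= mul1n. Qed.

Lemma full_span X : \dim <<X>>%VS = n -> <<X>>%VS = fullv.
Proof.
move=> H; apply/eqP; rewrite eqEdim subvf /= H dim_rV //.
Qed.

Lemma span_line_full l X : l \notin <<X>>%VS -> \dim <<X>>%VS = n.-1 ->
  (<<X>> + <[l]>)%VS = fullv.
Proof.
move=> lX HX.
have cap0 : (<<X>> :&: <[l]>)%VS = 0%VS.
  apply/eqP; rewrite -subv0; apply/subvP => v; rewrite memv_cap memv0.
  case/andP => vX /vlineP [c vc]; apply: contraR lX => v0.
  have c0 : c != 0 by apply: contra v0 => /eqP c0; rewrite vc c0 scale0r.
  by rewrite -[l](scalerK c0) -vc memvZ.
have l0 : l != 0 by apply: contra lX => /eqP ->; rewrite mem0v.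
have Hd := dimv_disjoint_sum cap0.
rewrite dim_vline l0 HX in Hd.
have := dimvS (subvf (<<X>> + <[l]>)%VS); rewrite Hd dim_rV => Hle.
have En : (n.-1 + true = n)%N by move: Hle; case: (n) => // m _; rewrite addn1.
apply/eqP; rewrite eqEdim subvf /= Hd En dim_rV //.
Qed.
End Span.
Section Uniq.
Variables (R : realType) (n : nat).

Lemma normal_unique (rs : seq 'rV[R]_n) (M : 'rV[R]_n -> Prop)
  (P : 'rV[R]_n -> Prop) (l1 l2 : 'rV[R]_n) :
  (<<rs>> = fullv)%VS -> (forall a, a \in rs -> M a) -> affine_dim P n ->
  primitive M l1 -> primitive M l2 -> affine_dim (face P l1) n.-1 ->
  (forall x, face P l1 x <-> face P l2 x) -> l1 = l2.
Proof.
move=> Hrs Mrs [[x1 [pts1 [Px1 Ppts1 dim1]]] _] [l10 Ml1 Hl1] [l20 Ml2 Hl2].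
move=> [[x0 [pts [Fx0 Fpts dimX]]] _] Hface.
set X := [seq p - x0 | p <- pts] in dimX.
have orth1 : forall w, w \in X -> dot l1 w = 0 /\ dot l2 w = 0.
  move=> w /mapP [p pin ->]; have Fp := Fpts p pin.
  have [Px0 H0] := Fx0; have [Pp Hp] := Fp.
  have [_ H0'] := (Hface x0).1 Fx0; have [_ Hp'] := (Hface p).1 Fp.
  rewrite !dotBr; split; apply/eqP; rewrite subr_eq0 eq_le.
    by rewrite H0 // Hp.
  by rewrite H0' // Hp'.
have l1X : l1 \notin <<X>>%VS by apply: notin_span => // w /orth1 [].
have full := span_line_full l1X dimX.
have : l2 \in (<<X>> + <[l1]>)%VS by rewrite full memvf.
case/memv_addP => u uX [v /vlineP [c ->] El2].
have u0 : u = 0.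
  apply/eqP; rewrite -dot_eq0.
  have Eu : u = l2 - c *: l1 by rewrite El2 addrK.
  rewrite {1}Eu dotBl dotZl.
  rewrite (orth_span (fun w h => (orth1 w h).2) uX).
  by rewrite (orth_span (fun w h => (orth1 w h).1) uX) mulr0 subr0.
rewrite u0 add0r in El2.
have c_gt0 : 0 < c.
  rewrite lt_neqAle eq_sym; apply/andP; split.
    by apply: contra l20 => /eqP c0; rewrite El2 c0 scale0r.
  rewrite leNgt; apply/negP => c_lt0.
  have Hall : forall y, P y -> dot l1 y = dot l1 x0.
    move=> y Py; apply/eqP; rewrite eq_le (Fx0.2 y Py) /=.
    have [_ H2] := (Hface x0).1 Fx0; have := H2 y Py.
    by rewrite El2 !dotZl ler_nM2l.
  have orth2 : forall w, w \in [seq p - x1 | p <- pts1] -> dot l1 w = 0.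
    move=> w /mapP [p pin ->].
    by rewrite dotBr (Hall _ (Ppts1 _ pin)) (Hall _ Px1) subrr.
  by have := notin_span l10 orth2; rewrite full_span // memvf.
have [a ars Ha] : exists2 a, a \in rs & dot l1 a != 0.
  case: (boolP (has (fun a => dot l1 a != 0) rs)) => [/hasP [a ? ?]|/hasPn H].
    by exists a.
  have orth3 : forall w, w \in rs -> dot l1 w = 0.
    by move=> w wr; have := H w wr; rewrite negbK => /eqP.
  by have := notin_span l10 orth3; rewrite Hrs memvf.
have m1i := Ml1 a (Mrs a ars); have m2i := Ml2 a (Mrs a ars).
have Hm2 : dot l2 a = c * dot l1 a by rewrite El2 dotZl.
have E1 := floorK m1i; have E2 := floorK m2i.
pose r : rat := (Num.floor (dot l2 a))%:~R / (Num.floor (dot l1 a))%:~R.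
have Hr : ratr r = c.
  by rewrite /r fmorph_div !rmorph_int E1 E2 Hm2 mulfK.
have r_gt0 : 0 < r by rewrite -(ltr0q R) Hr.
have p_gt0 : 0 < numq r by rewrite numq_gt0.
have q_gt0 := denq_gt0 r.
have Hpq : coprimez (numq r) (denq r) by rewrite coprimezE coprime_num_den.
have [[u1 u2] /= Huv] := coprimezP _ _ Hpq.
have Hc : c = (numq r)%:~R / (denq r)%:~R.
  by rewrite -Hr -{1}(divq_num_den r) fmorph_div !rmorph_int.
pose y := u1%:~R *: l2 + u2%:~R *: l1.
have Ey : l1 = (`|denq r|%N)%:R *: y.
  rewrite /y El2 Hc !scalerA -scalerDl scalerA natr_absz gtr0_norm //.
  have q0 : (denq r)%:~R != 0 :> R by rewrite intr_eq0 gt_eqF.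
  suff -> : (denq r)%:~R * (u1%:~R * ((numq r)%:~R / (denq r)%:~R) + u2%:~R) = 1 :> R.
    by rewrite scale1r.
  have H' : (u1 * numq r + u2 * denq r)%:~R = 1 :> R by rewrite Huv.
  rewrite -[X in _ = X]H' rmorphD !rmorphM /=; field.
  exact: q0.
have My : Mdual M y.
  move=> w Mw; rewrite /y dotDl !dotZl.
  by apply: rpredD; apply: rpredM; rewrite ?intr_int //; [apply: Ml2 | apply: Ml1].
have q1 := Hl1 y `|denq r|%N My Ey.
have Eq : denq r = 1 by rewrite -(gtz0_abs q_gt0) q1.
have El2' : l2 = (`|numq r|%N)%:R *: l1.
  by rewrite El2 Hc Eq divr1 natr_absz gtr0_norm.
have p1 := Hl2 l1 `|numq r|%N Ml1 El2'.
by rewrite El2' p1 scale1r.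
Qed.
End Uniq.
Unset Implicit Arguments.
Lemma split_lshift m n (a : 'I_m) : split (lshift n a) = inl a.
Proof. exact: (unsplitK (inl a)). Qed.
Lemma split_rshift m n (a : 'I_n) : split (rshift m a) = inr a.
Proof. exact: (unsplitK (inr a)). Qed.

Lemma toQK (R : realType) (x : R) : x \is a Num.int -> ratr (toQ x) = x.
Proof. by move=> xi; rewrite /toQ rmorph_int floorK. Qed.

Lemma dot_sumr (R : realType) n (I : Type) (r : seq I) (P : pred I)
   (f : I -> 'rV[R]_n) z :
  dot z (\sum_(i <- r | P i) f i) = \sum_(i <- r | P i) dot z (f i).
Proof. exact: (big_morph (dot z) (fun x y => @dotDr R n x y z) (dot0r z)). Qed.

Theorem lemma4p3
  (R : realType) (n : nat)
  (rs : seq 'rV[R]_n) (alpha : 'I_n -> 'rV[R]_n)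
  (M : 'rV[R]_n -> Prop) (Lam : seq 'rV[R]_n) (K : {set 'I_n})
  (lH : 'I_n -> 'rV[R]_n)
  (FK : seq 'rV[R]_n) (Fam : seq ('rV[R]_n * 'rV[R]_n))
  (C : 'rV[R]_n -> 'rV[R]_n -> 'I_n -> rat) :
  is_root_system rs ->
  is_simple_system rs alpha ->
  is_lattice_M rs M ->
  (forall l, l \in Lam -> in_CS alpha l /\ QM M l) ->
  affine_dim (polytope rs Lam) n ->
  simple_polytope M (polytope rs Lam) ->
  non_degenerate alpha (polytope rs Lam) ->
  (forall k, k \in K -> is_lH alpha K M (polytope rs Lam) k (lH k)) ->
  uniq FK ->
  (forall l, l \in FK <-> in_FK alpha K M (polytope rs Lam) l) ->
  uniq Fam ->
  (forall F G, (F, G) \in Fam <->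
      (F \in FK /\ in_WK_orbit alpha K M (polytope rs Lam) F G)) ->
  (forall F G, (F, G) \in Fam ->
     forall s : seq 'I_n, all (mem K) s ->
       facet_image alpha (polytope rs Lam) s F G ->
       wactK alpha s F - F = \sum_(k in K) ratr (C F G k) *: lH k) ->
  forall p : {mpoly rat[size FK + #|K|]},
    ideal_gen (@JK_gen R n K M lH FK) p ->
    ideal_gen (setU_pred (@IP_gen R n (polytope rs Lam) Fam)
                         (@JP_gen R n M Fam))
              (@Phi R n K FK Fam C p).
Proof.
move=> Hroot Hsimple HM _ Hdim _ _ HlH uFK HFK _ HFam HC.
have [r0 Hrs _ _ _] := Hroot.
have [alpha_rs _ _] := Hsimple.
have Ha : forall k, dot (alpha k) (alpha k) != 0.
  move=> k; rewrite dot_eq0; apply: contra r0 => /eqP <-; exact: alpha_rs.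
have Mrs : forall a, a \in rs -> M a by case: HM.
set P := polytope rs Lam.
have key : forall u, M u -> forall j : 'I_(size Fam),
    toQ (dot u (famG Fam j)) = toQ (dot u (famF Fam j)) +
      \sum_(k in K) C (famF Fam j) (famG Fam j) k * toQ (dot u (lH k)).
  move=> u Mu j.
  have mem : (famF Fam j, famG Fam j) \in Fam.
    by rewrite /famF /famG -surjective_pairing mem_nth.
  have [FFK [GN [s [sK simg]]]] := (HFam _ _).1 mem.
  have FN := ((HFK _).1 FFK).1.
  have EG : famG Fam j = wactK alpha s (famF Fam j).
    apply: (normal_unique Hrs Mrs Hdim GN.1 (primitive_wactK alpha_rs Ha HM s FN.1) GN.2).
    move=> x; split => H.
      by apply/(face_wactK Lam alpha_rs Ha); apply/simg.
    by apply/simg; apply/(face_wactK Lam alpha_rs Ha).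
  have hC := HC _ _ mem s sK simg.
  have intG : forall l, primitive M l -> dot u l \is a Num.int.
    by move=> l [_ Ml _]; rewrite dotC; apply: Ml.
  apply: (fmorph_inj (@ratr R)).
  rewrite rmorphD rmorph_sum /= toQK; last exact: intG GN.1.
  rewrite toQK; last exact: intG FN.1.
  have E : dot u (famG Fam j) = dot u (famF Fam j) +
      \sum_(k in K) ratr (C (famF Fam j) (famG Fam j) k) * dot u (lH k).
    rewrite {1}EG -(subrK (famF Fam j) (wactK alpha s (famF Fam j))) hC dotDr addrC.
    by congr (_ + _); rewrite dot_sumr; apply: eq_bigr => k kK; rewrite dotZr.
  rewrite E; congr (_ + _); apply: eq_bigr => k kK.
  by rewrite rmorphM /= toQK //; exact: intG (HlH k kK).1.
have famF_FK : forall j : 'I_(size Fam), famF Fam j \in FK.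
  move=> j; have mem : (famF Fam j, famG Fam j) \in Fam.
    by rewrite /famF /famG -surjective_pairing mem_nth.
  by have [] := (HFam _ _).1 mem.
have PhiJ : forall g, @JK_gen R n K M lH FK g -> @JP_gen R n M Fam (@Phi R n K FK Fam C g).
  move=> g [u [Mu ->]]; exists u; split => //.
  rewrite /Phi raddfD !raddf_sum /=.
  under eq_bigr => a _ do rewrite comp_mpolyZ comp_mpolyXU nth_mktuple /Phi_var split_lshift.
  under [X in _ + X = _]eq_bigr => i _ do rewrite comp_mpolyZ comp_mpolyXU nth_mktuple /Phi_var split_rshift.
  under [RHS]eq_bigr => j _ do rewrite (key u Mu j) scalerDl.
  rewrite big_split /=; congr (_ + _).
    under eq_bigr => a _ do rewrite scaler_sumr big_mkcond.
    rewrite exchange_big /=; apply: eq_bigr => j _.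
    have jFK := famF_FK j.
    have ilt : (index (famF Fam j) FK < size FK)%N by rewrite index_mem.
    pose a0 : 'I_(size FK) := Ordinal ilt.
    rewrite (bigD1 a0) //= big1 ?addr0.
      by rewrite (nth_index 0 jFK) eqxx.
    move=> a aa0; case: ifP => // /eqP E; exfalso; move/eqP: aa0; apply.
    by apply/val_inj => /=; rewrite E index_uniq.
  under eq_bigr => i _ do rewrite scaler_sumr.
  rewrite exchange_big /=; apply: eq_bigr => j _.
  rewrite scaler_suml [RHS]big_enum_val; apply: eq_bigr => i _.
  by rewrite scalerA mulrC.
move=> p [gs [cs [Hsz Hgs ->]]].
exists (map (@Phi R n K FK Fam C) gs), (map (@Phi R n K FK Fam C) cs); split.
- by rewrite !size_map.
- move=> i; right.
  have ilt : (i < size gs)%N by rewrite -(size_map (@Phi R n K FK Fam C)).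
  rewrite (nth_map 0) //; apply: PhiJ; exact: (Hgs (Ordinal ilt)).
- transitivity (\sum_(i < size gs) @Phi R n K FK Fam C cs`_i * @Phi R n K FK Fam C gs`_i).
    by rewrite /Phi rmorph_sum; apply: eq_bigr => i _; rewrite rmorphM.
  rewrite size_map; apply: eq_bigr => i _.
  by rewrite !(nth_map 0) // -?Hsz.
Qed.
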